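(* Let $G$ be a heap and let $G^1=\langle V^1,s^1_1,s^1_2,\mathsf{null},\mathsf{root}\rangle$ and $G^2=\langle V^2,s^2_1,s^2_2,\mathsf{null},\mathsf{root}\rangle$ be orable graphs with $V^1\cap V^2=\{\mathsf{null},\mathsf{root}\}$. Then $G\to G^1+G^2$ if and only if $G\to G^1$ or $G\to G^2$.
   Context: A graph is a tuple $\langle V,s_1,s_2,\mathsf{null},\mathsf{root}\rangle$ with $V$ finite, $\mathsf{root}\neq\mathsf{null}$ in $V$, $s_1,s_2\subseteq V\times V$, and $\langle\mathsf{null},x\rangle\in s_i$ iff $x=\mathsf{null}$. A heap is a graph in which $s_1,s_2$ are total functions and every node other than $\mathsf{null}$ is reachable from $\mathsf{root}$ along $s_1\cup s_2$. A homomorphism $h:G\to G'$ is a map on nodes preserving $s_1$- and $s_2$-edges with $h(x)=\mathsf{root}'$ iff $x=\mathsf{root}$ and $h(x)=\mathsf{null}'$ iff $x=\mathsf{null}$; $G\to G'$ means one exists. A graph is orable if for all nodes $x$: $\langle\mathsf{root},x\rangle\in s_2$ iff $x=\mathsf{null}$. For orable $G^1,G^2$ sharing $\mathsf{null},\mathsf{root}$ with $V^1\cap V^2=\{\mathsf{null},\mathsf{root}\}$, the sum $G^1+G^2=\langle V^1\cup V^2,\ s^1_1\cup s^2_1,\ s^1_2\cup s^2_2,\ \mathsf{null},\mathsf{root}\rangle$. *)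

(* Defs.v *)
From mathcomp Require Import all_boot.
Set Implicit Arguments. Unset Strict Implicit. Unset Printing Implicit Defensive.

(* A graph <V, s1, s2, null, root>: nodes are drawn from an ambient finite
   type T (so V is finite); s1, s2 are relations on T that are required
   (by is_graph) to be contained in V x V. *)
Record graph (T : finType) := Graph {
  gV : {set T};
  gs1 : rel T;
  gs2 : rel T;
  gnull : T;
  groot : T }.

Definition is_graph (T : finType) (G : graph T) : Prop :=
  [/\ gnull G \in gV G, groot G \in gV G & groot G != gnull G] /\
  [/\ (forall x y, gs1 G x y -> x \in gV G /\ y \in gV G),
      (forall x y, gs2 G x y -> x \in gV G /\ y \in gV G),
      (forall x, x \in gV G -> (gs1 G (gnull G) x <-> x = gnull G)) &
      (forall x, x \in gV G -> (gs2 G (gnull G) x <-> x = gnull G))].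

Definition gedge (T : finType) (G : graph T) : rel T :=
  fun x y => gs1 G x y || gs2 G x y.

Definition is_heap (T : finType) (G : graph T) : Prop :=
  [/\ is_graph G,
      (forall x, x \in gV G -> exists! y, gs1 G x y),
      (forall x, x \in gV G -> exists! y, gs2 G x y) &
      (forall x, x \in gV G -> x != gnull G -> connect (gedge G) (groot G) x)].

(* homomorphism G -> G' (only its values on V matter) *)
Definition is_hom (T T' : finType) (G : graph T) (G' : graph T') (h : T -> T') : Prop :=
  [/\ (forall x, x \in gV G -> h x \in gV G'),
      (forall x y, gs1 G x y -> gs1 G' (h x) (h y)),
      (forall x y, gs2 G x y -> gs2 G' (h x) (h y)),
      (forall x, x \in gV G -> (h x = groot G' <-> x = groot G)) &
      (forall x, x \in gV G -> (h x = gnull G' <-> x = gnull G))].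

Definition hom_exists (T T' : finType) (G : graph T) (G' : graph T') : Prop :=
  exists h : T -> T', is_hom G G' h.

Notation "G ---> G'" := (hom_exists G G') (at level 70).

Definition orable (T : finType) (G : graph T) : Prop :=
  forall x, x \in gV G -> (gs2 G (groot G) x <-> x = gnull G).

(* sum of two graphs on the same ambient type sharing null and root *)
Definition gsum (T : finType) (G1 G2 : graph T) : graph T :=
  Graph (gV G1 :|: gV G2)
        (fun x y => gs1 G1 x y || gs1 G2 x y)
        (fun x y => gs2 G1 x y || gs2 G2 x y)
        (gnull G1) (groot G1).

(* Main.v *)
Require Import Defs.
From mathcomp Require Import all_boot.

Lemma path_inv (T0 : finType) (e : rel T0) (P : T0 -> Prop) :
  (forall x y, e x y -> P x -> P y) ->
  forall p z, P z -> path e z p -> P (last z p).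
Proof.
move=> He; elim=> [|a p IH] z Pz //= /andP[ez pa].
exact: IH (He _ _ ez Pz) pa.
Qed.

Lemma side (T0 T : finType) (G : graph T0) (Ga Gb : graph T) (h : T0 -> T) r1 :
  is_heap G -> is_graph Ga -> is_graph Gb -> orable Ga -> orable Gb ->
  gnull Ga = gnull Gb -> groot Ga = groot Gb ->
  gV Ga :&: gV Gb = [set gnull Ga; groot Ga] ->
  (forall x y, gs1 G x y -> gs1 Ga (h x) (h y) || gs1 Gb (h x) (h y)) ->
  (forall x y, gs2 G x y -> gs2 Ga (h x) (h y) || gs2 Gb (h x) (h y)) ->
  (forall x, x \in gV G -> (h x = groot Ga <-> x = groot G)) ->
  (forall x, x \in gV G -> (h x = gnull Ga <-> x = gnull G)) ->
  gs1 G (groot G) r1 -> gs1 Ga (groot Ga) (h r1) ->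
  is_hom G Ga h.
Proof.
move=> [[[nV rV rn] [E1 E2 N1 N2]] U1 U2 Reach] [[naV raV ran] [Ea1 Ea2 Na1 Na2]]
  [[nbV rbV rbn] [Eb1 Eb2 Nb1 Nb2]] Oa Ob en er I H1 H2 Hr Hn r1e r1a.
have hr : h (groot G) = groot Ga by apply/Hr.
have hn : h (gnull G) = gnull Ga by apply/Hn.
have Hr2 : forall y, gs2 G (groot G) y -> y = gnull G.
  move=> y e; have yV := (E2 _ _ e).2; apply/Hn => //.
  move: (H2 _ _ e); rewrite hr => /orP[e'|e'].
    by apply/(Oa _ (Ea2 _ _ e').2).
  rewrite en; rewrite er in e'; by apply/(Ob _ (Eb2 _ _ e').2).
have Hr1 : forall y, gs1 G (groot G) y -> y = r1.
  move=> y e; case: (U1 _ rV) => z [_ Hz].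
  by rewrite -(Hz _ e) (Hz _ r1e).
have Hn1 : forall y, gs1 G (gnull G) y -> y = gnull G.
  by move=> y e; apply/N1 => //; exact: (E1 _ _ e).2.
have Hn2 : forall y, gs2 G (gnull G) y -> y = gnull G.
  by move=> y e; apply/N2 => //; exact: (E2 _ _ e).2.
have inI : forall z, z \in gV Ga -> z \in gV Gb -> z = gnull Ga \/ z = groot Ga.
  move=> z za zb; have : z \in gV Ga :&: gV Gb by rewrite inE za zb.
  by rewrite I !inE => /orP[/eqP->|/eqP->]; [left|right].
have Key : forall x, x \in gV G -> h x \in gV Ga -> x <> groot G -> x <> gnull G ->
    forall y, (gs1 G x y -> gs1 Ga (h x) (h y)) /\ (gs2 G x y -> gs2 Ga (h x) (h y)).
  move=> x xV hxa xr xn y; have bad : h x \in gV Gb -> False.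
    move=> hxb; case: (inI _ hxa hxb) => e.
      by apply: xn; apply/Hn.
    by apply: xr; apply/Hr.
  split=> e.
    move: (H1 _ _ e) => /orP[//|e']; by case: bad; exact: (Eb1 _ _ e').1.
  move: (H2 _ _ e) => /orP[//|e']; by case: bad; exact: (Eb2 _ _ e').1.
have Step : forall x y, gedge G x y -> h x \in gV Ga -> h y \in gV Ga.
  move=> x y e hxa.
  have xV : x \in gV G by case/orP: e => e; [exact: (E1 _ _ e).1 | exact: (E2 _ _ e).1].
  have [xn|xn] := eqVneq x (gnull G).
    by rewrite xn in e; case/orP: e => [/Hn1|/Hn2] ->; rewrite hn.
  have [xr|xr] := eqVneq x (groot G).
    rewrite xr in e; case/orP: e => [/Hr1 ->|/Hr2 ->]; first exact: (Ea1 _ _ r1a).2.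
    by rewrite hn.
  have [K1 K2] := Key x xV hxa (elimN eqP xr) (elimN eqP xn) y.
  case/orP: e => e; [exact: (Ea1 _ _ (K1 e)).2 | exact: (Ea2 _ _ (K2 e)).2].
have All : forall x, x \in gV G -> h x \in gV Ga.
  move=> x xV; have [xn|xn] := eqVneq x (gnull G); first by rewrite xn hn.
  case/connectP: (Reach _ xV xn) => p pa ->.
  apply: (@path_inv _ _ (fun z => h z \in gV Ga) _ p) pa; last by rewrite hr.
  by move=> ? ?; apply: Step.
split=> //.
- move=> x y e; have xV := (E1 _ _ e).1.
  have [xn|xn] := eqVneq x (gnull G).
    rewrite xn in e *; rewrite (Hn1 _ e) hn; by apply/Na1.
  have [xr|xr] := eqVneq x (groot G).
    rewrite xr in e *; by rewrite (Hr1 _ e) hr.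
  exact: ((Key x xV (All _ xV) (elimN eqP xr) (elimN eqP xn) y).1 e).
- move=> x y e; have xV := (E2 _ _ e).1.
  have [xn|xn] := eqVneq x (gnull G).
    rewrite xn in e *; rewrite (Hn2 _ e) hn; by apply/Na2.
  have [xr|xr] := eqVneq x (groot G).
    rewrite xr in e *; rewrite (Hr2 _ e) hr hn; by apply/Oa.
  exact: ((Key x xV (All _ xV) (elimN eqP xr) (elimN eqP xn) y).2 e).
Qed.

Theorem proposition30 (T0 T : finType) (G : graph T0) (G1 G2 : graph T) :
  is_heap G -> is_graph G1 -> is_graph G2 -> orable G1 -> orable G2 ->
  gnull G1 = gnull G2 -> groot G1 = groot G2 ->
  gV G1 :&: gV G2 = [set gnull G1; groot G1] ->
  (G ---> gsum G1 G2 <-> (G ---> G1 \/ G ---> G2)).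
Proof.
move=> HG g1 g2 o1 o2 en er I; split.
  case=> h [hV h1 h2 hr hn].
  have rV : groot G \in gV G by case: HG => [[[]]].
  case: (HG) => _ U1 _ _; case: (U1 _ rV) => r1 [r1e _].
  have hr' : h (groot G) = groot G1 by apply/hr.
  move: (h1 _ _ r1e); rewrite /= hr' => /orP[e|e].
    left; exists h; apply: (@side _ _ G G1 G2 h r1) => //.
  right; exists h; apply: (@side _ _ G G2 G1 h r1) => //.
  - by rewrite setIC -en -er I setUC.
  - by move=> x y e'; rewrite orbC; apply: h1.
  - by move=> x y e'; rewrite orbC; apply: h2.
  - by rewrite -er.
  - by rewrite -en.
  - by rewrite -er.
case=> [] [h [hV h1 h2 hr hn]]; exists h; split=> //=.
- by move=> x xV; rewrite inE hV.
- by move=> x y e; rewrite h1.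
- by move=> x y e; rewrite h2.
- by move=> x xV; rewrite inE (hV _ xV) orbT.
- by move=> x y e; rewrite (h1 _ _ e) orbT.
- by move=> x y e; rewrite (h2 _ _ e) orbT.
- by rewrite er.
- by rewrite en.
Qed.
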